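(* Let $X$ be a metric space and $v\in X$ a point such that $\mathscr C(v)$ is finite, and let $A_v:=A(d_v)$. Then: (1) every $A\in\mathscr A(X)$ with $A\subset A_v$ satisfies $\mathrm{rk}(A)\le\frac12|\mathscr C(v)|$; (2) there are at most $2^{|\mathscr C(v)|-1}-1$ sets $A\in\mathscr A(X)$ with $A\subset A_v$ and $\mathrm{rk}(A)=1$.
   Context: $d_v=d(\cdot,v)$. $I(x,y)=\{u: d(x,u)+d(u,y)=d(x,y)\}$, $C(x,v)=\{y: v\in I(x,y)\}$, and $\mathscr C(v)=\{C(x,v): x\in X\}$. For $f\colon X\to\mathbb R$, $A(f)$ is the set of unordered pairs $\{x,y\}$ ($x=y$ allowed) with $f(x)+f(y)=d(x,y)$; $\Delta(X)=\{f: f(x)+f(y)\ge d(x,y)\ \forall x,y\}$; $\mathscr A(X)=\{A(f): f\in\Delta(X),\ \bigcup A(f)=X\}$; $\mathrm{rk}(A)=\dim\{g\in\mathbb R^X: g(x)+g(y)=d(x,y)\ \forall\{x,y\}\in A\}$. *)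

(* Defs.v *)
From Stdlib Require Import Reals List Arith.
Open Scope R_scope.

Definition is_metric {X : Type} (d : X -> X -> R) : Prop :=
  (forall x y, d x y = 0 <-> x = y) /\
  (forall x y, d x y = d y x) /\
  (forall x y z, d x z <= d x y + d y z).

Definition interval {X : Type} (d : X -> X -> R) (x y : X) : X -> Prop :=
  fun u => d x u + d u y = d x y.

Definition Cset {X : Type} (d : X -> X -> R) (x v : X) : X -> Prop :=
  fun y => interval d x y v.

(* A set of unordered pairs {x,y} (x = y allowed) over X is represented by a
   symmetric relation: A x y <-> {x,y} in A. *)
Definition pairset (X : Type) := X -> X -> Prop.

Definition Aof {X : Type} (d : X -> X -> R) (f : X -> R) : pairset X :=
  fun x y => f x + f y = d x y.

Definition in_Delta {X : Type} (d : X -> X -> R) (f : X -> R) : Prop :=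
  forall x y, f x + f y >= d x y.

Definition in_scriptA {X : Type} (d : X -> X -> R) (A : pairset X) : Prop :=
  exists f, in_Delta d f /\ A = Aof d f /\ (forall x, exists y, Aof d f x y).

Definition pair_subset {X : Type} (A B : pairset X) : Prop :=
  forall x y, A x y -> B x y.

Fixpoint lincomb {X : Type} (n : nat) (c : nat -> R) (b : nat -> X -> R) (x : X) : R :=
  match n with
  | O => 0
  | S k => lincomb k c b x + c k * b k x
  end.

Definition solset {X : Type} (d : X -> X -> R) (A : pairset X) : (X -> R) -> Prop :=
  fun g => forall x y, A x y -> g x + g y = d x y.

Definition affine_dim {X : Type} (S : (X -> R) -> Prop) (n : nat) : Prop :=
  exists (g0 : X -> R) (b : nat -> X -> R),
    (forall c : nat -> R, (forall x, lincomb n c b x = 0) ->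
        forall i, (i < n)%nat -> c i = 0) /\
    (forall g, S g <-> exists c : nat -> R, forall x, g x = g0 x + lincomb n c b x).

Definition rk_eq {X : Type} (d : X -> X -> R) (A : pairset X) (n : nat) : Prop :=
  affine_dim (solset d A) n.

Definition scriptC_card {X : Type} (d : X -> X -> R) (v : X) (m : nat) : Prop :=
  exists l : list (X -> Prop), NoDup l /\ length l = m /\
    (forall S, In S l <-> exists x, S = Cset d x v).

(* Main.v *)
Require Import Defs.
From Stdlib Require Import Reals List Arith Lra Lia Classical ClassicalEpsilon FunctionalExtensionality PropExtensionality.
Open Scope R_scope.

Lemma lincomb_ext {X : Type} n c1 c2 (b1 b2 : nat -> X -> R) x :
  (forall i, (i < n)%nat -> c1 i * b1 i x = c2 i * b2 i x) ->
  lincomb n c1 b1 x = lincomb n c2 b2 x.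
Proof.
  induction n; simpl; intros H; [reflexivity|].
  rewrite IHn by (intros; apply H; lia). rewrite H by lia. reflexivity.
Qed.

Definition subspace {X : Type} (V : (X -> R) -> Prop) :=
  V (fun _ => 0) /\ (forall g k, V g -> V k -> V (fun x => g x + k x)) /\
  (forall a g, V g -> V (fun x => a * g x)) /\ (forall g k, V g -> (forall x, g x = k x) -> V k).

Lemma basis_exists {X : Type} (ts : list X) : forall V : (X->R)->Prop, subspace V ->
  (forall k, V k -> (forall t, In t ts -> k t = 0) -> forall x, k x = 0) ->
  exists n b, (n <= length ts)%nat /\
    (forall c : nat -> R, (forall x, lincomb n c b x = 0) -> forall i, (i < n)%nat -> c i = 0) /\
    (forall g, V g <-> exists c, forall x, g x = lincomb n c b x).
Proof.
  induction ts as [|t ts IH]; intros V HV Hdet.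
  - exists 0%nat, (fun _ _ => 0). split; [simpl; lia|]. split; [intros; lia|].
    intro g; split.
    + intros Hg. exists (fun _ => 0). intros x. simpl. apply (Hdet g Hg). intros t [].
    + intros [c Hc]. destruct HV as (H0&_&_&Hext). apply (Hext _ _ H0). intros x; rewrite Hc; reflexivity.
  - set (V' := fun k => V k /\ k t = 0).
    destruct HV as (H0&Hadd&Hsc&Hext).
    assert (HV' : subspace V').
    { unfold V'; split; [|split; [|split]].
      - split; [exact H0|reflexivity].
      - intros g k [Hg Hgt] [Hk Hkt]. split; [apply Hadd; auto| lra].
      - intros a g [Hg Hgt]. split; [apply Hsc; auto| rewrite Hgt; ring].
      - intros g k [Hg Hgt] He. split; [apply (Hext g); auto| rewrite <- He; auto]. }
    destruct (IH V' HV') as (n' & b' & Hn' & Hind & Hspan).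
    { intros k [Hk Hkt] Hz x. apply (Hdet k Hk). intros t0 [<-|Ht0]; auto. }
    destruct (classic (exists w, V w /\ w t <> 0)) as [[w [Hw Hwt]]|Hno].
    + set (w1 := fun x => w x / w t).
      assert (Hw1 : V w1).
      { apply (Hext (fun x => / w t * w x)). apply Hsc; auto. intros x; unfold w1, Rdiv; ring. }
      assert (Hw1t : w1 t = 1). { unfold w1. field. auto. }
      assert (HV'c : forall c, V' (lincomb n' c b')).
      { intros c. apply Hspan. exists c. reflexivity. }
      set (b := fun i => if Nat.eqb i n' then w1 else b' i).
      assert (Hlb : forall c x, lincomb (S n') c b x = lincomb n' c b' x + c n' * w1 x).
      { intros c x. simpl. unfold b at 2. rewrite Nat.eqb_refl. f_equal.
        apply lincomb_ext. intros i Hi. unfold b. replace (Nat.eqb i n') with false; auto.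
        symmetry; apply Nat.eqb_neq; lia. }
      exists (S n'), b. split; [simpl; lia|]. split.
      * intros c Hc.
        assert (Hcn : c n' = 0).
        { specialize (Hc t). rewrite Hlb in Hc. destruct (HV'c c) as [_ Ht].
          rewrite Ht, Hw1t in Hc. lra. }
        intros i Hi. destruct (Nat.eq_dec i n') as [->|Hne]; auto.
        apply Hind; [|lia]. intros x. specialize (Hc x). rewrite Hlb, Hcn in Hc. lra.
      * intros g; split.
        -- intros Hg.
           assert (Hg' : V' (fun x => g x - g t * w1 x)).
           { split.
             - apply Hadd; auto. apply (Hext (fun x => (- g t) * w1 x)); [apply Hsc; auto|].
               intros; ring.
             - rewrite Hw1t; ring. }
           apply Hspan in Hg'. destruct Hg' as [c Hc].
           exists (fun i => if Nat.eqb i n' then g t else c i). intros x.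
           rewrite Hlb, Nat.eqb_refl.
           rewrite (lincomb_ext n' _ c b' b'). { rewrite <- Hc. ring. }
           intros i Hi. replace (Nat.eqb i n') with false; auto.
           symmetry; apply Nat.eqb_neq; lia.
        -- intros [c Hc]. apply (Hext (fun x => lincomb n' c b' x + c n' * w1 x)).
           ++ apply Hadd. apply (HV'c c). apply Hsc; auto.
           ++ intros x. rewrite Hc, Hlb. reflexivity.
    + exists n', b'. split; [simpl; lia|]. split; auto.
      intros g; split.
      * intros Hg. apply Hspan. split; auto.
        destruct (Req_dec (g t) 0); auto. exfalso; apply Hno; exists g; auto.
      * intros Hc. apply Hspan in Hc. apply Hc.
Qed.

Definition bdec (P : Prop) : bool := if excluded_middle_informative P then true else false.
Lemma bdec_true (P : Prop) : bdec P = true <-> P.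
Proof. unfold bdec; destruct (excluded_middle_informative P); split; congruence || tauto. Qed.
Lemma bdec_false (P : Prop) : bdec P = false <-> ~ P.
Proof. unfold bdec; destruct (excluded_middle_informative P); split; congruence || tauto. Qed.

Definition good {X : Type} (d : X -> X -> R) (v : X) (f : X -> R) :=
  is_metric d /\ in_Delta d f /\ (forall x, exists y, Aof d f x y) /\
  pair_subset (Aof d f) (Aof d (d v)).

Lemma Aof_sym {X : Type} d (f : X -> R) x y : is_metric d -> Aof d f x y -> Aof d f y x.
Proof. intros (_&Hs&_). unfold Aof. rewrite Hs. lra. Qed.

Lemma hconst {X : Type} d v (f : X -> R) x x' : good d v f ->
  Cset d x v = Cset d x' v -> f x - d v x = f x' - d v x'.
Proof.
  intros (Hm&HD&Hc&Hs) Heq. destruct Hm as (H0&Hsym&Htr).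
  destruct (Hc x) as [y Hy]. destruct (Hc x') as [y' Hy'].
  pose proof (Hs _ _ Hy) as Ey. pose proof (Hs _ _ Hy') as Ey'. unfold Aof in *.
  assert (Cy : Cset d x v y). { unfold Cset, interval. rewrite (Hsym x v). lra. }
  assert (Cy' : Cset d x' v y'). { unfold Cset, interval. rewrite (Hsym x' v). lra. }
  rewrite Heq in Cy. rewrite <- Heq in Cy'. unfold Cset, interval in Cy, Cy'.
  rewrite (Hsym x' v) in Cy. rewrite (Hsym x v) in Cy'.
  pose proof (HD x' y). pose proof (HD x y'). lra.
Qed.

Lemma share {X : Type} d v (f : X -> R) x x' y : good d v f ->
  Aof d f x y -> Cset d x v = Cset d x' v -> Aof d f x' y.
Proof.
  intros G Hy Heq. pose proof (hconst d v f x x' G Heq) as Hh.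
  destruct G as (Hm&HD&Hc&Hs). destruct Hm as (H0&Hsym&Htr).
  pose proof (Hs _ _ Hy) as Ey. unfold Aof in *.
  assert (Cy : Cset d x v y). { unfold Cset, interval. rewrite (Hsym x v). lra. }
  rewrite Heq in Cy. unfold Cset, interval in Cy. rewrite (Hsym x' v) in Cy. lra.
Qed.

Lemma nat_min (P : nat -> Prop) n : P n -> exists n0, P n0 /\ forall k, P k -> (n0 <= k)%nat.
Proof.
  intros Pn. destruct (classic (exists n0, P n0 /\ forall k, P k -> (n0 <= k)%nat)) as [H|H]; auto.
  exfalso.
  assert (A : forall j k, (k <= j)%nat -> ~ P k).
  { induction j; intros k Hk Pk; apply H; exists k; split; auto; intros k' Pk';
      destruct (le_lt_dec k k'); auto; exfalso.
    - lia.
    - apply (IHj k'); [lia|auto]. }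
  exact (A n n (le_n n) Pn).
Qed.

Lemma kconst {X : Type} d v (f : X -> R) (k : X -> R) x x' : good d v f ->
  (forall x y, Aof d f x y -> k x + k y = 0) ->
  Cset d x v = Cset d x' v -> k x = k x'.
Proof.
  intros G Hk Heq. pose proof G as (_&_&Hc&_). destruct (Hc x) as [y Hy].
  pose proof (share d v f x x' y G Hy Heq) as Hy'.
  pose proof (Hk _ _ Hy). pose proof (Hk _ _ Hy'). lra.
Qed.

Definition Adj {X : Type} d v (f : X -> R) (S T : X -> Prop) :=
  exists x y, S = Cset d x v /\ T = Cset d y v /\ Aof d f x y.

Lemma Adj_pts {X : Type} d v (f : X -> R) S T x y : good d v f ->
  Adj d v f S T -> S = Cset d x v -> T = Cset d y v -> Aof d f x y.
Proof.
  intros G (x0&y0&HS&HT&H) -> ->.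
  pose proof G as (Hm&_). symmetry in HS, HT.
  apply (share d v f x0 x y0 G H) in HS.
  apply Aof_sym in HS; auto. apply (share d v f y0 y x G HS) in HT.
  apply Aof_sym; auto.
Qed.

Lemma Adj_sym {X : Type} d v (f : X -> R) S T : is_metric d -> Adj d v f S T -> Adj d v f T S.
Proof. intros Hm (x&y&?&?&H). exists y, x. repeat split; auto. apply Aof_sym; auto. Qed.

Definition covers {X : Type} d v (f : X -> R) (l : list (X -> Prop)) (pD : (X -> Prop) -> bool) :=
  forall S, In S l -> pD S = true \/ (exists T, pD T = true /\ Adj d v f S T) \/ Adj d v f S S.

Lemma filter_lt {A : Type} (p q : A -> bool) l :
  (forall x, q x = true -> p x = true) -> (exists x, In x l /\ p x = true /\ q x = false) ->
  (length (filter q l) < length (filter p l))%nat.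
Proof.
  intros Hqp. induction l as [|a l IH]; intros (x&Hx&Hp&Hq); [destruct Hx|].
  simpl. destruct Hx as [->|Hx].
  - rewrite Hp, Hq. simpl. 
    assert (length (filter q l) <= length (filter p l))%nat.
    { clear IH. induction l as [|b l IH2]; simpl; auto.
      destruct (q b) eqn:E; [rewrite (Hqp b E); simpl; lia|].
      destruct (p b); simpl; lia. }
    lia.
  - specialize (IH (ex_intro _ x (conj Hx (conj Hp Hq)))).
    destruct (q a) eqn:E; [rewrite (Hqp a E); simpl; lia|].
    destruct (p a); simpl; lia.
Qed.

Lemma small_cover {X : Type} d v (f : X -> R) (l : list (X -> Prop)) m : good d v f ->
  NoDup l -> length l = m -> (forall S, In S l <-> exists x, S = Cset d x v) ->
  exists pD, covers d v f l pD /\ (2 * length (filter pD l) <= m)%nat.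
Proof.
  intros G Hnd Hlen Hl. pose proof G as (Hm&_&Hc&_).
  set (P := fun n => exists pD, covers d v f l pD /\ length (filter pD l) = n).
  destruct (nat_min P (length (filter (fun _ => true) l))) as (n0 & (pD & Hcov & Hn0) & Hmin).
  { exists (fun _ => true). split; auto. intros S _. left; auto. }
  assert (Hcov2 : covers d v f l (fun S => negb (pD S))).
  { intros S HS. destruct (pD S) eqn:ES; [|left; auto].
    destruct (classic (Adj d v f S S)) as [HSS|HSS]; [right; right; auto|].
    destruct (classic (exists T, pD T = false /\ Adj d v f S T)) as [(T&HT&HA)|HnT].
    { right; left. exists T. rewrite HT; auto. }
    exfalso.
    set (pD' := fun U => andb (pD U) (negb (bdec (U = S)))).
    assert (Hc' : covers d v f l pD').
    { intros U HU. destruct (classic (U = S)) as [->|HUS].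
      - apply Hl in HS. destruct HS as [x ->].
        destruct (Hc x) as [y Hy].
        assert (HA : Adj d v f (Cset d x v) (Cset d y v)) by (exists x, y; auto).
        right; left. exists (Cset d y v). split; auto.
        unfold pD'. destruct (pD (Cset d y v)) eqn:Ey.
        + simpl. destruct (bdec (Cset d y v = Cset d x v)) eqn:Eb; auto.
          apply (proj1 (bdec_true _)) in Eb. rewrite Eb in HA. contradiction.
        + exfalso; apply HnT. exists (Cset d y v); auto.
      - destruct (pD U) eqn:EU.
        + left. unfold pD'. rewrite EU. simpl.
          destruct (bdec (U = S)) eqn:Eb; auto. apply (proj1 (bdec_true _)) in Eb; contradiction.
        + destruct (Hcov U HU) as [H1|[(T&HT&HA)|H3]]; [congruence| |auto].
          right; left. exists T. split; auto.
          destruct (classic (T = S)) as [->|HTS].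
          * exfalso. apply HnT. exists U. split; auto. apply Adj_sym; auto.
          * unfold pD'. rewrite HT. simpl. destruct (bdec (T = S)) eqn:Eb; auto.
            apply (proj1 (bdec_true _)) in Eb; contradiction. }
    assert (Hlt : (length (filter pD' l) < length (filter pD l))%nat).
    { apply filter_lt.
      - intros x. unfold pD'. destruct (pD x); auto.
      - exists S. split; auto. split; auto. unfold pD'. rewrite ES. simpl.
        destruct (bdec (S = S)) eqn:Eb; auto. apply (proj1 (bdec_false _)) in Eb. contradiction. }
    assert (P (length (filter pD' l))) by (exists pD'; auto).
    specialize (Hmin _ H). lia. }
  pose proof (filter_length pD l) as Hfl.
  destruct (le_lt_dec (length (filter pD l)) (length (filter (fun x => negb (pD x)) l))).
  - exists pD. split; auto. lia.
  - exists (fun x => negb (pD x)). split; auto. lia.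
Qed.

Definition Kspace {X : Type} d (f : X -> R) := fun k : X -> R => forall x y, Aof d f x y -> k x + k y = 0.

Lemma Kspace_sub {X : Type} d (f : X -> R) : subspace (Kspace d f).
Proof.
  unfold Kspace; split; [|split; [|split]].
  - intros; lra.
  - intros g k Hg Hk x y H. specialize (Hg x y H). specialize (Hk x y H). lra.
  - intros a g Hg x y H. specialize (Hg x y H). rewrite <- Rmult_plus_distr_l, Hg. ring.
  - intros g k Hg He x y H. rewrite <- !He. auto.
Qed.

Lemma rk_from_basis {X : Type} d (f : X -> R) n b :
  (forall c : nat -> R, (forall x, lincomb n c b x = 0) -> forall i, (i < n)%nat -> c i = 0) ->
  (forall g, Kspace d f g <-> exists c, forall x, g x = lincomb n c b x) ->
  rk_eq d (Aof d f) n.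
Proof.
  intros Hind Hsp. exists f, b. split; auto. intros g. split.
  - intros Hg. destruct (proj1 (Hsp (fun x => g x - f x))) as [c Hc].
    + intros x y H. specialize (Hg x y H). unfold Aof in H. lra.
    + exists c. intros x. specialize (Hc x). lra.
  - intros [c Hc]. assert (Kspace d f (fun x => g x - f x)).
    { apply Hsp. exists c. intros x. rewrite Hc. ring. }
    intros x y Hxy. specialize (H x y Hxy). unfold Aof in Hxy. lra.
Qed.

Definition rep {X : Type} d (v : X) (S : X -> Prop) : X :=
  epsilon (inhabits v) (fun x => S = Cset d x v).

Lemma part1 {X : Type} d (v : X) m f : good d v f -> scriptC_card d v m ->
  exists n, rk_eq d (Aof d f) n /\ (2 * n <= m)%nat.
Proof.
  intros G (l & Hnd & Hlen & Hl). pose proof G as (Hm&_&Hc&_).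
  destruct (small_cover d v f l m G Hnd Hlen Hl) as (pD & Hcov & Hsz).
  assert (Hrep : forall S, In S l -> S = Cset d (rep d v S) v).
  { intros S HS. unfold rep. apply (epsilon_spec (inhabits v) (fun x => S = Cset d x v)).
    apply Hl; auto. }
  set (ts := map (rep d v) (filter pD l)).
  destruct (basis_exists ts (Kspace d f) (Kspace_sub d f)) as (n & b & Hn & Hind & Hsp).
  { intros k Hk Hz x.
    assert (HS : In (Cset d x v) l) by (apply Hl; eauto).
    assert (Hk0 : forall T, In T l -> pD T = true -> forall y, T = Cset d y v -> k y = 0).
    { intros T HT HpT y ->. rewrite (kconst d v f k y (rep d v (Cset d y v)) G Hk).
      - apply Hz. unfold ts. apply in_map. apply filter_In; auto.
      - apply Hrep; auto. }
    destruct (Hcov _ HS) as [H1|[(T&HT&HA)|H3]].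
    - apply (Hk0 _ HS H1); auto.
    - assert (HTl : In T l) by (destruct HA as (x0&y0&_&->&_); apply Hl; eauto).
      pose proof (Hrep T HTl) as ET.
      pose proof (Adj_pts d v f _ _ x (rep d v T) G HA eq_refl ET) as HA'.
      pose proof (Hk _ _ HA'). pose proof (Hk0 T HTl HT _ ET). lra.
    - pose proof (Adj_pts d v f _ _ x x G H3 eq_refl eq_refl) as HA'.
      pose proof (Hk _ _ HA'). lra. }
  exists n. split.
  - apply (rk_from_basis d f n b); auto.
  - unfold ts in Hn. rewrite length_map in Hn. lia.
Qed.

Lemma A_char {X : Type} d v (f : X -> R) x y : good d v f ->
  (Aof d f x y <-> d v x + d v y = d x y /\ (f x - d v x) + (f y - d v y) = 0).
Proof.
  intros (Hm&HD&Hc&Hs). split.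
  - intros H. pose proof (Hs _ _ H). unfold Aof in *. split; lra.
  - intros [H1 H2]. unfold Aof. lra.
Qed.


Lemma rank1_structure {X : Type} d (v : X) f : good d v f -> rk_eq d (Aof d f) 1 ->
  exists s, s > 0 /\ (forall x, f x - d v x = 0 \/ f x - d v x = s \/ f x - d v x = - s) /\
    (exists q, f q - d v q < 0).
Proof.
  intros G (g0 & b & Hind & Hsp). pose proof G as (Hm&HD&Hc&Hs).
  pose proof Hm as (H0&Hsym&Htr).
  set (h := fun x => f x - d v x).
  assert (HK : forall k, Kspace d f k -> exists mu, forall x, k x = mu * b 0%nat x).
  { intros k Hk.
    destruct (proj1 (Hsp f)) as [cf Hcf]. { intros x y H; exact H. }
    destruct (proj1 (Hsp (fun x => f x + k x))) as [ck Hck].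
    { intros x y H. specialize (Hk x y H). unfold Aof in H. lra. }
    exists (ck 0%nat - cf 0%nat). intros x. specialize (Hcf x). specialize (Hck x).
    simpl in Hcf, Hck. lra. }
  assert (Hb : Kspace d f (b 0%nat)).
  { assert (S1 : solset d (Aof d f) g0) by (apply Hsp; exists (fun _ => 0); intros; simpl; ring).
    assert (S2 : solset d (Aof d f) (fun x => g0 x + b 0%nat x))
      by (apply Hsp; exists (fun _ => 1); intros; simpl; ring).
    intros x y H. specialize (S1 x y H). specialize (S2 x y H). lra. }
  assert (Hbnz : exists z, b 0%nat z <> 0).
  { apply NNPP. intros Hn. assert (1 = 0); [|lra].
    refine (Hind (fun _ => 1) _ 0%nat _); [|lia]. intros x. simpl.
    destruct (Req_dec (b 0%nat x) 0) as [E|E]; [rewrite E; ring|].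
    exfalso; apply Hn; eauto. }
  assert (Hh : Kspace d f h).
  { intros x y H. pose proof (Hs _ _ H). unfold h, Aof in *. lra. }
  assert (Hhv : h v >= 0).
  { unfold h. pose proof (HD v v). assert (d v v = 0) by (apply H0; auto). lra. }
  assert (Hz0 : exists z0, h z0 <> 0).
  { apply NNPP. intros Hn.
    assert (Hall : forall x, h x = 0).
    { intros x. destruct (Req_dec (h x) 0); auto. exfalso; apply Hn; eauto. }
    destruct Hbnz as [z Hz]. apply Hz.
    assert (dvv : d v v = 0) by (apply H0; auto).
    assert (Avv : Aof d f v v) by (pose proof (Hall v); unfold h, Aof in *; lra).
    assert (Azv : Aof d f z v) by (pose proof (Hall v); pose proof (Hall z);
                                    unfold h, Aof in *; rewrite (Hsym z v); lra).
    pose proof (Hb _ _ Avv). pose proof (Hb _ _ Azv). lra. }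
  destruct Hz0 as [z0 Hz0].
  destruct (HK h Hh) as [mu0 Hmu0].
  assert (Hmu0nz : mu0 <> 0) by (intro E; apply Hz0; rewrite Hmu0, E; ring).
  set (s := Rabs (h z0)).
  set (kk := fun x => if Req_EM_T (Rabs (h x)) s then h x else 0).
  assert (Hkk : Kspace d f kk).
  { intros x y H. pose proof (Hh x y H) as Hxy.
    assert (Rabs (h y) = Rabs (h x)) by (replace (h y) with (- h x) by lra; apply Rabs_Ropp).
    unfold kk. destruct (Req_EM_T (Rabs (h x)) s); destruct (Req_EM_T (Rabs (h y)) s); lra. }
  destruct (HK kk Hkk) as [mu Hmu].
  assert (Hkh : forall x, kk x = (mu / mu0) * h x).
  { intros x. rewrite Hmu, Hmu0. field. exact Hmu0nz. }
  assert (Hl1 : mu / mu0 = 1).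
  { pose proof (Hkh z0) as E. unfold kk in E. destruct (Req_EM_T (Rabs (h z0)) s) as [_|N].
    - apply (Rmult_eq_reg_r (h z0)); auto. lra.
    - exfalso; apply N; reflexivity. }
  exists s. split; [|split].
  - unfold s. apply Rabs_pos_lt; auto.
  - intros x. pose proof (Hkh x) as E. rewrite Hl1 in E. unfold kk in E.
    fold (h x). destruct (Req_EM_T (Rabs (h x)) s) as [Ea|Na].
    + right. destruct (Rle_or_lt 0 (h x)).
      * left. rewrite Rabs_right in Ea; lra.
      * right. rewrite Rabs_left in Ea; lra.
    + left. lra.
  - destruct (Rlt_or_le (h z0) 0) as [Hn|Hp]; [exists z0; exact Hn|].
    destruct (Hc z0) as [y Hy]. exists y. pose proof (Hh _ _ Hy). fold (h y). lra.
Qed.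

Lemma pos_transfer {X : Type} d (v : X) f f' s' x : good d v f -> good d v f' -> s' > 0 ->
  (forall x, f' x - d v x = 0 \/ f' x - d v x = s' \/ f' x - d v x = - s') ->
  (forall x, f x - d v x < 0 -> f' x - d v x < 0) ->
  f x - d v x > 0 -> f' x - d v x > 0.
Proof.
  intros G G' Hs' St Hneg Hx. pose proof G as (Hm&HD&Hc&Hs). pose proof G' as (_&HD'&_&_).
  destruct (Hc x) as [y Hy]. apply (A_char d v f x y G) in Hy. destruct Hy as [E1 E2].
  assert (f' y - d v y < 0) by (apply Hneg; lra).
  assert (f' y - d v y = - s') by (destruct (St y) as [?|[?|?]]; lra).
  pose proof (HD' x y). lra.
Qed.

Lemma sum_char a b s : s > 0 -> (a = 0 \/ a = s \/ a = - s) -> (b = 0 \/ b = s \/ b = - s) ->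
  (a + b = 0 <-> (a = 0 /\ b = 0) \/ (a > 0 /\ b < 0) \/ (a < 0 /\ b > 0)).
Proof.
  intros Hs [ -> | [ -> | -> ]] [ -> | [ -> | -> ]]; split; intros; intuition lra.
Qed.

Lemma unique_A {X : Type} d (v : X) f f' : good d v f -> good d v f' ->
  rk_eq d (Aof d f) 1 -> rk_eq d (Aof d f') 1 ->
  (forall x, f x - d v x < 0 <-> f' x - d v x < 0) ->
  Aof d f = Aof d f'.
Proof.
  intros G G' R R' Hneg.
  destruct (rank1_structure d v f G R) as (s & Hs & St & _).
  destruct (rank1_structure d v f' G' R') as (s' & Hs' & St' & _).
  assert (Pos : forall x, f x - d v x > 0 <-> f' x - d v x > 0).
  { intros x; split.
    - apply (pos_transfer d v f f' s'); auto. intros; apply Hneg; auto.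
    - apply (pos_transfer d v f' f s); auto. intros; apply Hneg; auto. }
  apply functional_extensionality; intros x. apply functional_extensionality; intros y.
  apply propositional_extensionality.
  rewrite (A_char d v f x y G), (A_char d v f' x y G').
  rewrite (sum_char _ _ s Hs (St x) (St y)), (sum_char _ _ s' Hs' (St' x) (St' y)).
  pose proof (Hneg x). pose proof (Hneg y). pose proof (Pos x). pose proof (Pos y).
  assert (Zx : f x - d v x = 0 <-> f' x - d v x = 0).
  { split; intros E; destruct (Rtotal_order (f' x - d v x) 0) as [?|[?|?]];
      destruct (Rtotal_order (f x - d v x) 0) as [?|[?|?]]; intuition lra. }
  assert (Zy : f y - d v y = 0 <-> f' y - d v y = 0).
  { split; intros E; destruct (Rtotal_order (f' y - d v y) 0) as [?|[?|?]];
      destruct (Rtotal_order (f y - d v y) 0) as [?|[?|?]]; intuition lra. }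
  tauto.
Qed.

Fixpoint pw {A : Type} (l : list A) : list (list A) :=
  match l with nil => nil :: nil | a :: l => map (cons a) (pw l) ++ pw l end.
Fixpoint pw1 {A : Type} (l : list A) : list (list A) :=
  match l with nil => nil | a :: l => map (cons a) (pw l) ++ pw1 l end.

Lemma pw_length {A : Type} (l : list A) : length (pw l) = (2 ^ length l)%nat.
Proof. induction l; simpl; auto. rewrite length_app, length_map, IHl. lia. Qed.

Lemma pw1_length {A : Type} (l : list A) : length (pw1 l) = (2 ^ length l - 1)%nat.
Proof.
  induction l; simpl; auto. rewrite length_app, length_map, IHl, pw_length.
  pose proof (Nat.pow_le_mono_r 2 0 (length l) ltac:(lia) ltac:(lia)). simpl in H. lia.
Qed.

Lemma filter_pw {A : Type} (q : A -> bool) l : In (filter q l) (pw l).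
Proof.
  induction l; simpl; auto. destruct (q a); apply in_or_app; [left; apply in_map|right]; auto.
Qed.

Lemma filter_pw1 {A : Type} (q : A -> bool) l : (exists x, In x l /\ q x = true) -> In (filter q l) (pw1 l).
Proof.
  induction l as [|a l IH]; intros (x&Hx&Hq); [destruct Hx|]. simpl.
  destruct (q a) eqn:E; apply in_or_app.
  - left; apply in_map, filter_pw.
  - right. apply IH. destruct Hx as [->|Hx]; [congruence|eauto].
Qed.

Lemma filter_true_len {A : Type} (l : list A) : length (filter (fun _ => true) l) = length l.
Proof. induction l; simpl; auto. Qed.

Definition GoodL {X : Type} d (v : X) (L : list (X -> Prop)) (A : pairset X) :=
  in_scriptA d A /\ pair_subset A (Aof d (d v)) /\ rk_eq d A 1 /\
  exists f, good d v f /\ A = Aof d f /\ forall x, (f x - d v x < 0 <-> In (Cset d x v) L).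

Theorem proposition5p6 (X : Type) (d : X -> X -> R) (v : X) (m : nat) :
  is_metric d ->
  scriptC_card d v m ->
  (forall A : pairset X, in_scriptA d A -> pair_subset A (Aof d (d v)) ->
     exists n : nat, rk_eq d A n /\ (2 * n <= m)%nat) /\
  (exists s : list (pairset X),
     (forall A : pairset X, in_scriptA d A -> pair_subset A (Aof d (d v)) ->
        rk_eq d A 1 -> In A s) /\
     (length s <= 2 ^ (m - 1) - 1)%nat).
Proof.
  intros Hm HC. split.
  - intros A (f & HD & -> & Hc) Hs. apply (part1 d v m f); [|exact HC]. split; [exact Hm|split; [exact HD|split; [exact Hc|exact Hs]]].
  - pose proof HC as (l & Hnd & Hlen & Hl).
    set (l' := filter (fun S => negb (bdec (S = Cset d v v))) l).
    set (F := fun L => epsilon (inhabits (fun _ _ : X => False)) (GoodL d v L)).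
    exists (map F (pw1 l')). split.
    + intros A HA Hs Hr. pose proof HA as (f & HD & EA & Hc). subst A.
      assert (G : good d v f) by (split; [exact Hm|split; [exact HD|split; [exact Hc|exact Hs]]]).
      destruct (rank1_structure d v f G Hr) as (s & Hspos & St & (q & Hq)).
      assert (Hhv : f v - d v v >= 0).
      { pose proof (HD v v). assert (d v v = 0) by (apply (proj1 Hm); auto). lra. }
      set (L := filter (fun S => bdec (exists x, S = Cset d x v /\ f x - d v x < 0)) l').
      assert (Key : forall x, f x - d v x < 0 <-> In (Cset d x v) L).
      { intros x. unfold L, l'. rewrite !filter_In. split.
        - intros Hx. split; [split|].
          + apply Hl; eauto.
          + destruct (bdec (Cset d x v = Cset d v v)) eqn:E; auto.
            apply (proj1 (bdec_true _)) in E. pose proof (hconst d v f x v G E). lra.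
          + apply bdec_true. eauto.
        - intros (_ & E). apply (proj1 (bdec_true _)) in E. destruct E as (x' & E & Hx').
          rewrite (hconst d v f x x' G E). auto. }
      assert (HL : In L (pw1 l')).
      { apply filter_pw1. exists (Cset d q v). split.
        - apply Key in Hq. unfold L in Hq. apply filter_In in Hq. tauto.
        - apply bdec_true. eauto. }
      assert (GL : GoodL d v L (F L)).
      { apply epsilon_spec. exists (Aof d f). repeat split; auto. exists f. auto. }
      destruct GL as (_ & _ & Hr' & f' & G' & E' & Key').
      assert (Aof d f = F L).
      { rewrite E'. rewrite E' in Hr'. apply (unique_A d v f f' G G' Hr Hr').
        intros x. rewrite Key, Key'. tauto. }
      rewrite H. apply in_map. exact HL.
    + rewrite length_map, pw1_length.
      assert (Hlt : (length l' < length l)%nat).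
      { rewrite <- (filter_true_len l). unfold l'. apply filter_lt.
        - auto.
        - exists (Cset d v v). split; [apply Hl; eauto|]. split; auto.
          destruct (bdec (Cset d v v = Cset d v v)) eqn:E; auto.
          apply (proj1 (bdec_false _)) in E. contradiction. }
      pose proof (Nat.pow_le_mono_r 2 (length l') (m - 1) ltac:(lia) ltac:(lia)). lia.
Qed.
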